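(* Let $(X,d,\alpha)$ be a computable metric space which is locally computable. Let $S$ be a co-computably enumerable closed set in $(X,d,\alpha)$ which is compact. Then $S$ is a semi-computable compact set in $(X,d,\alpha)$.
   Context: A computable metric space is a triple $(X,d,\alpha)$ where $(X,d)$ is a metric space and $\alpha=(\alpha_i)_{i\in\mathbb N}$ is a sequence with dense range in $(X,d)$ such that $(i,j)\mapsto d(\alpha_i,\alpha_j)$ is a computable function $\mathbb N^2\to\mathbb R$ (a function $g:\mathbb N^k\to\mathbb R$ is computable if there is a computable $G:\mathbb N^{k+1}\to\mathbb Q$ with $|g(x)-G(x,i)|<2^{-i}$ for all $x,i$). Fix a computable $q:\mathbb N\to\mathbb Q$ whose image is the set of positive rationals and computable $\tau_1,\tau_2:\mathbb N\to\mathbb N$ with $\{(\tau_1(i),\tau_2(i)):i\in\mathbb N\}=\mathbb N^2$; let $\lambda_i=\alpha_{\tau_1(i)}$, $\rho_i=q_{\tau_2(i)}$, $I_i=B(\lambda_i,\rho_i)$ (open ball). Fix computable $\sigma:\mathbb N^2\to\mathbb N$, $\eta:\mathbb N\to\mathbb N$ such that $\{(\sigma(j,0),\dots,\sigma(j,\eta(j))):j\in\mathbb N\}$ is the set of all nonempty finite sequences in $\mathbb N$; let $[j]=\{\sigma(j,i):0\le i\le\eta(j)\}$ and $J_j=\bigcup_{i\in[j]}I_i$. A compact $K$ is semi-computable compact if $\{j: K\subseteq J_j\}$ is computably enumerable, and computable compact if additionally $\{i:K\cap I_i\neq\emptyset\}$ is computably enumerable. A closed set $S$ is co-computably enumerable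 closed if there is a computable $f:\mathbb N\to\mathbb N$ with $X\setminus S=\bigcup_{i\in\mathbb N}I_{f(i)}$. $(X,d,\alpha)$ is locally computable if every compact set in $(X,d)$ is contained in some computable compact set. *)

(* Defs.v *)
From Stdlib Require Import Reals QArith Qreals List Arith.
Open Scope R_scope.

Inductive code : Type :=
| CZero : code
| CSucc : code
| CProj : nat -> code
| CComp : code -> list code -> code
| CPrim : code -> code -> code
| CMu : code -> code.

Inductive eval : code -> list nat -> nat -> Prop :=
| ev_zero v : eval CZero v 0
| ev_succ n v : eval CSucc (n :: v) (S n)
| ev_proj i v : (i < length v)%nat -> eval (CProj i) v (nth i v 0%nat)
| ev_comp f gs v ws r : evals gs v ws -> eval f ws r -> eval (CComp f gs) v r
| ev_prim0 f g v r : eval f v r -> eval (CPrim f g) (0%nat :: v) r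
| ev_primS f g n v r r' :
    eval (CPrim f g) (n :: v) r -> eval g (n :: r :: v) r' ->
    eval (CPrim f g) (S n :: v) r'
| ev_mu f v n :
    eval f (n :: v) 0%nat ->
    (forall m, (m < n)%nat -> exists k, eval f (m :: v) (S k)) ->
    eval (CMu f) v n
with evals : list code -> list nat -> list nat -> Prop :=
| evs_nil v : evals nil v nil
| evs_cons g gs v w ws : eval g v w -> evals gs v ws -> evals (g :: gs) v (w :: ws).

Definition computable1 (f : nat -> nat) : Prop :=
  exists p, forall n, eval p (n :: nil) (f n).
Definition computable2 (f : nat -> nat -> nat) : Prop :=
  exists p, forall n m, eval p (n :: m :: nil) (f n m).
Definition computable3 (f : nat -> nat -> nat -> nat) : Prop :=
  exists p, forall n m k, eval p (n :: m :: k :: nil) (f n m k).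

Definition computableQ1 (G : nat -> Q) : Prop :=
  exists a b c, computable1 a /\ computable1 b /\ computable1 c /\
    forall n, Q2R (G n) = (INR (a n) - INR (b n)) / (INR (c n) + 1).
Definition computableQ3 (G : nat -> nat -> nat -> Q) : Prop :=
  exists a b c, computable3 a /\ computable3 b /\ computable3 c /\
    forall n m k, Q2R (G n m k) =
      (INR (a n m k) - INR (b n m k)) / (INR (c n m k) + 1).

Definition computableR2 (g : nat -> nat -> R) : Prop :=
  exists G : nat -> nat -> nat -> Q, computableQ3 G /\
    forall x y i, Rabs (g x y - Q2R (G x y i)) < (/ 2) ^ i.

Definition ce_set (A : nat -> Prop) : Prop :=
  exists h : nat -> nat -> nat, computable2 h /\
    forall n, A n <-> exists k, h n k = 0%nat.

Definition is_metric {X : Type} (d : X -> X -> R) : Prop :=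
  (forall x y, 0 <= d x y) /\
  (forall x y, d x y = 0 <-> x = y) /\
  (forall x y, d x y = d y x) /\
  (forall x y z, d x z <= d x y + d y z).

Definition ball {X : Type} (d : X -> X -> R) (x : X) (r : R) : X -> Prop :=
  fun y => d x y < r.

Definition open_set {X : Type} (d : X -> X -> R) (U : X -> Prop) : Prop :=
  forall x, U x -> exists eps, 0 < eps /\ forall y, ball d x eps y -> U y.

Definition closed_set {X : Type} (d : X -> X -> R) (S : X -> Prop) : Prop :=
  open_set d (fun x => ~ S x).

Definition compact_set {X : Type} (d : X -> X -> R) (K : X -> Prop) : Prop :=
  forall (I : Type) (U : I -> X -> Prop),
    (forall i, open_set d (U i)) ->
    (forall x, K x -> exists i, U i x) ->
    exists l : list I, forall x, K x -> exists i, In i l /\ U i x.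

Definition computable_metric_space {X : Type} (d : X -> X -> R) (alpha : nat -> X) : Prop :=
  is_metric d /\
  (forall x eps, 0 < eps -> exists i, d x (alpha i) < eps) /\
  computableR2 (fun i j => d (alpha i) (alpha j)).

Definition admissible_enums (q : nat -> Q) (tau1 tau2 : nat -> nat)
  (sigma : nat -> nat -> nat) (eta : nat -> nat) : Prop :=
  computableQ1 q /\
  (forall n, 0 < Q2R (q n)) /\
  (forall r : Q, 0 < Q2R r -> exists n, Q2R (q n) = Q2R r) /\
  computable1 tau1 /\ computable1 tau2 /\
  (forall a b, exists i, tau1 i = a /\ tau2 i = b) /\
  computable2 sigma /\ computable1 eta /\
  (forall l : list nat, l <> nil ->
     exists j, length l = S (eta j) /\
       forall k, (k < length l)%nat -> sigma j k = nth k l 0%nat).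

Section Balls.
Context {X : Type} (d : X -> X -> R) (alpha : nat -> X) (q : nat -> Q)
  (tau1 tau2 : nat -> nat) (sigma : nat -> nat -> nat) (eta : nat -> nat).

Definition lambda (i : nat) : X := alpha (tau1 i).
Definition rho (i : nat) : R := Q2R (q (tau2 i)).
Definition I_ball (i : nat) : X -> Prop := ball d (lambda i) (rho i).
(** J_j = union of I_i for i in [j] = {sigma j k | k <= eta j}. *)
Definition J_union (j : nat) : X -> Prop :=
  fun x => exists k, (k <= eta j)%nat /\ I_ball (sigma j k) x.

Definition semi_computable_compact (K : X -> Prop) : Prop :=
  compact_set d K /\ ce_set (fun j => forall x, K x -> J_union j x).

Definition computable_compact (K : X -> Prop) : Prop :=
  semi_computable_compact K /\
  ce_set (fun i => exists x, K x /\ I_ball i x).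

Definition co_ce_closed (S : X -> Prop) : Prop :=
  closed_set d S /\
  exists f : nat -> nat, computable1 f /\
    forall x, ~ S x <-> exists i, I_ball (f i) x.

Definition locally_computable : Prop :=
  forall K : X -> Prop, compact_set d K ->
    exists L : X -> Prop, computable_compact L /\ forall x, K x -> L x.
End Balls.

(* Main.v *)
Require Import Defs.
From Stdlib Require Import Reals QArith Qreals List Arith Lia Lra Classical.
Import ListNotations.
Local Open Scope nat_scope.

Definition compN (n : nat) (F : list nat -> nat) : Prop :=
  exists p, forall v, length v = n -> eval p v (F v).
Definition compsN (n : nat) (Fs : list (list nat -> nat)) : Prop :=
  exists ps, forall v, length v = n -> evals ps v (map (fun F => F v) Fs).

Lemma cN_ext n F G : compN n F -> (forall v, length v = n -> F v = G v) -> compN n G.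
Proof. intros [p Hp] H; exists p; intros v Hv; rewrite <- H by exact Hv; auto. Qed.

Lemma cN_proj n i : i < n -> compN n (fun v => nth i v 0).
Proof. intros Hi; exists (CProj i); intros v Hv; apply ev_proj; lia. Qed.

Lemma cN_zero n : compN n (fun _ => 0).
Proof. exists CZero; intros; constructor. Qed.

Lemma csN_nil n : compsN n [].
Proof. exists []; intros; constructor. Qed.
Lemma csN_cons n F Fs : compN n F -> compsN n Fs -> compsN n (F :: Fs).
Proof. intros [p Hp] [ps Hps]; exists (p :: ps); intros v Hv; simpl; constructor; auto. Qed.

Lemma cN_comp m n G Fs : compN m G -> compsN n Fs -> length Fs = m ->
  compN n (fun v => G (map (fun F => F v) Fs)).
Proof.
  intros [p Hp] [ps Hps] Hl; exists (CComp p ps); intros v Hv; econstructor.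
  - apply Hps; auto.
  - apply Hp; rewrite length_map; auto.
Qed.

Lemma cN_succ : compN 1 (fun v => S (nth 0 v 0)).
Proof.
  exists CSucc; intros v Hv; destruct v as [|a [|b w]]; simpl in Hv; try discriminate.
  constructor.
Qed.

Fixpoint primrec (F0 G : list nat -> nat) (k : nat) (w : list nat) : nat :=
  match k with 0 => F0 w | S k' => G (k' :: primrec F0 G k' w :: w) end.

Lemma cN_prim n F0 G : compN n F0 -> compN (S (S n)) G ->
  compN (S n) (fun v => primrec F0 G (hd 0 v) (tl v)).
Proof.
  intros [p0 H0] [pg Hg]; exists (CPrim p0 pg); intros v Hv.
  destruct v as [|k w]; [discriminate|]; simpl in Hv |- *; injection Hv as Hv.
  induction k; simpl.
  - constructor; auto.
  - econstructor; [exact IHk | apply Hg; simpl; lia].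
Qed.

Definition projs s k : list (list nat -> nat) := map (fun i v => nth i v 0) (seq s k).
Lemma csN_projs N s k : s + k <= N -> compsN N (projs s k).
Proof.
  revert s; induction k; intros s H; unfold projs; simpl.
  - apply csN_nil.
  - apply csN_cons. apply cN_proj; lia. apply (IHk (S s)); lia.
Qed.

Lemma map_projs pre w : map (fun F => F (pre ++ w)) (projs (length pre) (length w)) = w.
Proof.
  unfold projs; rewrite map_map. revert pre; induction w as [|a w IH]; intros pre; simpl; auto.
  f_equal. apply nth_middle.
  specialize (IH (pre ++ [a])). rewrite <- app_assoc in IH. rewrite length_app in IH.
  simpl in IH. rewrite Nat.add_1_r in IH. exact IH.
Qed.

Lemma cN_comp1 n G A : compN 1 G -> compN n A -> compN n (fun v => G [A v]).
Proof.
  intros HG HA. apply (cN_comp 1 n G [A]); auto. apply csN_cons; auto. apply csN_nil.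
Qed.
Lemma cN_comp2 n G A B : compN 2 G -> compN n A -> compN n B -> compN n (fun v => G [A v; B v]).
Proof.
  intros HG HA HB. apply (cN_comp 2 n G [A; B]); auto. repeat apply csN_cons; auto. apply csN_nil.
Qed.
Lemma cN_op1 (op : nat -> nat) n A : compN 1 (fun w => op (nth 0 w 0)) -> compN n A ->
  compN n (fun v => op (A v)).
Proof. intros H HA. exact (cN_comp1 n _ A H HA). Qed.
Lemma cN_op2 (op : nat -> nat -> nat) n A B : compN 2 (fun w => op (nth 0 w 0) (nth 1 w 0)) ->
  compN n A -> compN n B -> compN n (fun v => op (A v) (B v)).
Proof. intros H HA HB. exact (cN_comp2 n _ A B H HA HB). Qed.

Lemma cN_front n G A : compN (S n) G -> compN n A -> compN n (fun v => G (A v :: v)).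
Proof.
  intros HG HA. eapply cN_ext.
  - apply (cN_comp (S n) n G (A :: projs 0 n)); auto.
    + apply csN_cons; auto. apply csN_projs; lia.
    + simpl. unfold projs. rewrite length_map, length_seq. auto.
  - intros v Hv. simpl. f_equal. f_equal. subst n. apply (map_projs [] v).
Qed.

Lemma cN_shift n G : compN (S n) G -> compN (S (S n)) (fun v => G (S (hd 0 v) :: tl (tl v))).
Proof.
  intros HG. eapply cN_ext.
  - apply (cN_comp (S n) (S (S n)) G ((fun v => S (nth 0 v 0)) :: projs 2 n)); auto.
    + apply csN_cons. apply (cN_op1 S). apply cN_succ. apply cN_proj; lia.
      apply csN_projs; lia.
    + simpl. unfold projs. rewrite length_map, length_seq. auto.
  - intros v Hv. destruct v as [|k [|r w]]; simpl in Hv; try discriminate.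
    injection Hv as Hv. simpl. f_equal. f_equal. subst n. apply (map_projs [k; r] w).
Qed.

Lemma cN_bop (op : nat -> nat -> nat) (bop : (nat->nat) -> nat -> nat) :
  compN 2 (fun w => op (nth 0 w 0) (nth 1 w 0)) ->
  (forall g k, bop g (S k) = op (bop g k) (g (S k))) -> (forall g, bop g 0 = g 0) ->
  forall n G B, compN (S n) G -> compN n B ->
  compN n (fun v => bop (fun i => G (i :: v)) (B v)).
Proof.
  intros Hop HS H0 n G B HG HB.
  set (F0 := fun v : list nat => G (0 :: v)).
  set (H := fun v : list nat => op (nth 1 v 0) (G (S (hd 0 v) :: tl (tl v)))).
  assert (HF0 : compN n F0) by (apply (cN_front n G (fun _ => 0)); auto; apply cN_zero).
  assert (HH : compN (S (S n)) H).
  { apply (cN_op2 op); auto. apply cN_proj; lia. apply cN_shift; auto. }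
  pose proof (cN_prim n F0 H HF0 HH) as HP.
  eapply cN_ext. apply (cN_front n _ B HP HB).
  intros v _. simpl. generalize (B v). induction n0; simpl.
  - rewrite H0. reflexivity.
  - rewrite HS, IHn0. reflexivity.
Qed.

Lemma cN_add : compN 2 (fun w => nth 0 w 0 + nth 1 w 0).
Proof.
  eapply cN_ext. apply (cN_prim 1 (fun v => nth 0 v 0) (fun v => S (nth 1 v 0))).
  apply cN_proj; lia. apply (cN_op1 S). apply cN_succ. apply cN_proj; lia.
  intros v Hv. destruct v as [|x [|y [|z w]]]; simpl in Hv; try discriminate.
  simpl. induction x; simpl; auto.
Qed.

Lemma cN_mul : compN 2 (fun w => nth 0 w 0 * nth 1 w 0).
Proof.
  eapply cN_ext. apply (cN_prim 1 (fun _ => 0) (fun v => nth 1 v 0 + nth 2 v 0)).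
  apply cN_zero. apply (cN_op2 Nat.add). apply cN_add. apply cN_proj; lia. apply cN_proj; lia.
  intros v Hv. destruct v as [|x [|y [|z w]]]; simpl in Hv; try discriminate.
  simpl. induction x; simpl; auto. rewrite IHx. lia.
Qed.

Lemma cN_pred : compN 1 (fun w => pred (nth 0 w 0)).
Proof.
  eapply cN_ext. apply (cN_prim 0 (fun _ => 0) (fun v => nth 0 v 0)).
  apply cN_zero. apply cN_proj; lia.
  intros v Hv. destruct v as [|x [|y w]]; simpl in Hv; try discriminate.
  simpl. destruct x; reflexivity.
Qed.

Lemma cN_sub : compN 2 (fun w => nth 0 w 0 - nth 1 w 0).
Proof.
  pose proof (cN_prim 1 (fun v => nth 0 v 0) (fun v => pred (nth 1 v 0))) as HP.
  assert (HP' : compN 2 (fun v => primrec (fun v => nth 0 v 0) (fun v => pred (nth 1 v 0)) (hd 0 v) (tl v))).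
  { apply HP. apply cN_proj; lia. apply (cN_op1 pred). apply cN_pred. apply cN_proj; lia. }
  eapply cN_ext. apply (cN_comp2 2 _ (fun v => nth 1 v 0) (fun v => nth 0 v 0) HP').
  apply cN_proj; lia. apply cN_proj; lia.
  intros v Hv. destruct v as [|x [|y [|z w]]]; simpl in Hv; try discriminate.
  simpl. induction y; simpl. lia. rewrite IHy. lia.
Qed.

Definition eqd a b := (a - b) + (b - a).
Lemma eqd_0 a b : eqd a b = 0 <-> a = b.
Proof. unfold eqd; lia. Qed.

Lemma cN_eqd : compN 2 (fun w => eqd (nth 0 w 0) (nth 1 w 0)).
Proof.
  unfold eqd. apply (cN_op2 Nat.add 2 (fun w => nth 0 w 0 - nth 1 w 0) (fun w => nth 1 w 0 - nth 0 w 0)).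
  apply cN_add.
  apply (cN_op2 Nat.sub); [apply cN_sub|apply cN_proj|apply cN_proj]; lia.
  apply (cN_op2 Nat.sub); [apply cN_sub|apply cN_proj|apply cN_proj]; lia.
Qed.

Fixpoint bmul (g : nat -> nat) k := match k with 0 => g 0 | S k' => bmul g k' * g (S k') end.
Fixpoint bsum (g : nat -> nat) k := match k with 0 => g 0 | S k' => bsum g k' + g (S k') end.

Lemma bmul_0 g k : bmul g k = 0 <-> exists i, i <= k /\ g i = 0.
Proof.
  induction k; simpl.
  - split. intros; exists 0; auto. intros [i [Hi Hg]]. replace i with 0 in Hg by lia. auto.
  - rewrite Nat.mul_eq_0, IHk. split.
    + intros [[i [Hi Hg]]|Hg]. exists i; split; auto. exists (S k); auto.
    + intros [i [Hi Hg]]. destruct (Nat.eq_dec i (S k)). subst; auto. left; exists i; split; auto; lia.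
Qed.

Lemma bsum_0 g k : bsum g k = 0 <-> forall i, i <= k -> g i = 0.
Proof.
  induction k; simpl.
  - split. intros H i Hi. replace i with 0 by lia; auto. intros H; apply H; auto.
  - rewrite Nat.eq_add_0, IHk. split.
    + intros [H1 H2] i Hi. destruct (Nat.eq_dec i (S k)). subst; auto. apply H1; lia.
    + intros H; split; auto.
Qed.

Lemma cN_bmul n G B : compN (S n) G -> compN n B ->
  compN n (fun v => bmul (fun i => G (i :: v)) (B v)).
Proof. apply (cN_bop Nat.mul bmul); auto. apply cN_mul. Qed.
Lemma cN_bsum n G B : compN (S n) G -> compN n B ->
  compN n (fun v => bsum (fun i => G (i :: v)) (B v)).
Proof. apply (cN_bop Nat.add bsum); auto. apply cN_add. Qed.

Lemma cN_of1 f : computable1 f -> compN 1 (fun w => f (nth 0 w 0)).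
Proof.
  intros [p Hp]; exists p; intros v Hv; destruct v as [|x [|y w]]; simpl in Hv; try discriminate; apply Hp.
Qed.
Lemma cN_of2 f : computable2 f -> compN 2 (fun w => f (nth 0 w 0) (nth 1 w 0)).
Proof.
  intros [p Hp]; exists p; intros v Hv; destruct v as [|x [|y [|z w]]]; simpl in Hv; try discriminate; apply Hp.
Qed.
Definition H_inner (f : nat->nat) (sigma : nat->nat->nat) (eta : nat->nat) (hL : nat->nat->nat)
  (n j c m : nat) : nat :=
  hL j m + bsum (fun a => bmul (fun b => eqd (sigma j a) (sigma n b)) (eta n)
                        * bmul (fun i => eqd (f i) (sigma j a)) c) (eta j).
Definition Hsem f sigma eta hL n k :=
  bmul (fun j => bmul (fun c => bmul (fun m => H_inner f sigma eta hL n j c m) k) k) k.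

Lemma Hsem_comp f sigma eta hL : computable1 f -> computable2 sigma -> computable1 eta ->
  computable2 hL -> computable2 (fun n k => Hsem f sigma eta hL n k).
Proof.
  intros Hf Hs He Hh.
  pose proof (cN_of1 f Hf) as Cf. pose proof (cN_of2 sigma Hs) as Cs.
  pose proof (cN_of1 eta He) as Ce. pose proof (cN_of2 hL Hh) as Ch.
  (* v5 = [b; a; m; c; j; n; k] *)
  assert (C7a : compN 7 (fun w => eqd (sigma (nth 4 w 0) (nth 1 w 0)) (sigma (nth 5 w 0) (nth 0 w 0)))).
  { apply (cN_op2 eqd). apply cN_eqd.
    apply (cN_op2 sigma); auto; apply cN_proj; lia.
    apply (cN_op2 sigma); auto; apply cN_proj; lia. }
  assert (C7b : compN 7 (fun w => eqd (f (nth 0 w 0)) (sigma (nth 4 w 0) (nth 1 w 0)))).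
  { apply (cN_op2 eqd). apply cN_eqd.
    apply (cN_op1 f); auto; apply cN_proj; lia.
    apply (cN_op2 sigma); auto; apply cN_proj; lia. }
  (* v4 = [a; m; c; j; n; k] *)
  assert (C6 : compN 6 (fun v => bmul (fun b => eqd (sigma (nth 3 v 0) (nth 0 v 0)) (sigma (nth 4 v 0) b)) (eta (nth 4 v 0))
     * bmul (fun i => eqd (f i) (sigma (nth 3 v 0) (nth 0 v 0))) (nth 2 v 0))).
  { apply (cN_op2 Nat.mul). apply cN_mul.
    - apply (cN_bmul 6 _ (fun v => eta (nth 4 v 0)) C7a). apply (cN_op1 eta); auto; apply cN_proj; lia.
    - apply (cN_bmul 6 _ (fun v => nth 2 v 0) C7b). apply cN_proj; lia. }
  (* v3 = [m; c; j; n; k] *)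
  assert (C5 : compN 5 (fun v => H_inner f sigma eta hL (nth 3 v 0) (nth 2 v 0) (nth 1 v 0) (nth 0 v 0))).
  { unfold H_inner. apply (cN_op2 Nat.add). apply cN_add.
    - apply (cN_op2 hL); auto; apply cN_proj; lia.
    - apply (cN_bsum 5 _ (fun v => eta (nth 2 v 0)) C6). apply (cN_op1 eta); auto; apply cN_proj; lia. }
  (* v2 = [c; j; n; k] *)
  assert (C4 : compN 4 (fun v => bmul (fun m => H_inner f sigma eta hL (nth 2 v 0) (nth 1 v 0) (nth 0 v 0) m) (nth 3 v 0))).
  { apply (cN_bmul 4 _ (fun v => nth 3 v 0) C5). apply cN_proj; lia. }
  assert (C3 : compN 3 (fun v => bmul (fun c => bmul (fun m => H_inner f sigma eta hL (nth 1 v 0) (nth 0 v 0) c m) (nth 2 v 0)) (nth 2 v 0))).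
  { apply (cN_bmul 3 _ (fun v => nth 2 v 0) C4). apply cN_proj; lia. }
  assert (C2 : compN 2 (fun v => Hsem f sigma eta hL (nth 0 v 0) (nth 1 v 0))).
  { apply (cN_bmul 2 _ (fun v => nth 1 v 0) C3). apply cN_proj; lia. }
  destruct C2 as [p Hp]. exists p. intros n k. apply (Hp [n; k]). reflexivity.
Qed.
Lemma H_inner_0 f sigma eta hL n j c m :
  H_inner f sigma eta hL n j c m = 0 <->
  hL j m = 0 /\ forall a, a <= eta j ->
    (exists b, b <= eta n /\ sigma j a = sigma n b) \/ (exists i, i <= c /\ f i = sigma j a).
Proof.
  unfold H_inner. rewrite Nat.eq_add_0, bsum_0. split; intros [H1 H2]; split; auto; intros a Ha.
  - specialize (H2 a Ha). apply Nat.mul_eq_0 in H2. rewrite !bmul_0 in H2.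
    destruct H2 as [[b [Hb E]]|[i [Hi E]]]; rewrite eqd_0 in E; [left; exists b|right; exists i]; auto.
  - apply Nat.mul_eq_0. rewrite !bmul_0. destruct (H2 a Ha) as [[b [Hb E]]|[i [Hi E]]].
    left; exists b; rewrite eqd_0; auto. right; exists i; rewrite eqd_0; auto.
Qed.

Lemma Hsem_0 f sigma eta hL n k : Hsem f sigma eta hL n k = 0 <->
  exists j c m, j <= k /\ c <= k /\ m <= k /\ H_inner f sigma eta hL n j c m = 0.
Proof.
  unfold Hsem. rewrite bmul_0. split.
  - intros [j [Hj E]]. rewrite bmul_0 in E. destruct E as [c [Hc E]]. rewrite bmul_0 in E.
    destruct E as [m [Hm E]]. exists j, c, m; auto.
  - intros (j & c & m & Hj & Hc & Hm & E). exists j; split; auto. rewrite bmul_0.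
    exists c; split; auto. rewrite bmul_0. exists m; auto.
Qed.

Lemma nth_map_seq (g : nat -> nat) N k : k < N -> nth k (map g (seq 0 N)) 0 = g k.
Proof.
  intros Hk. rewrite nth_indep with (d' := g 0) by (rewrite length_map, length_seq; auto).
  rewrite map_nth, seq_nth by auto. reflexivity.
Qed.

Fixpoint maxl (l : list (option nat)) : nat :=
  match l with [] => 0 | None :: l' => maxl l' | Some i :: l' => Nat.max i (maxl l') end.
Lemma maxl_In l i : In (Some i) l -> i <= maxl l.
Proof.
  induction l as [|o l IH]; simpl; [tauto|]. intros [E|H].
  - subst; lia.
  - destruct o; specialize (IH H); lia.
Qed.

Section Geo.
Local Open Scope R_scope.
Lemma ball_open {X : Type} (d : X -> X -> R) c r : is_metric d -> Defs.open_set d (Defs.ball d c r).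
Proof.
  intros (_ & _ & _ & Htri) x Hx. unfold Defs.ball in *. exists (r - d c x). split. lra.
  intros y Hy. pose proof (Htri c x y). lra.
Qed.
End Geo.

Theorem proposition3p2 (X : Type) (d : X -> X -> R) (alpha : nat -> X)
  (q : nat -> Q) (tau1 tau2 : nat -> nat) (sigma : nat -> nat -> nat) (eta : nat -> nat)
  (Hcms : computable_metric_space d alpha)
  (Henum : admissible_enums q tau1 tau2 sigma eta)
  (Hloc : locally_computable d alpha q tau1 tau2 sigma eta)
  (S : X -> Prop)
  (HS : co_ce_closed d alpha q tau1 tau2 S)
  (HSc : compact_set d S) :
  semi_computable_compact d alpha q tau1 tau2 sigma eta S.
Proof.
  destruct Hcms as [Hmet _].
  destruct HS as [_ [f [Hf Hfc]]].
  destruct (Hloc S HSc) as [L [[[HLc [hL [HhL HhLe]]] _] HSL]].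
  destruct Henum as (_ & _ & _ & _ & _ & _ & Hsig & Heta & Henc).
  split; [exact HSc|].
  exists (fun n k => Hsem f sigma eta hL n k). split.
  { apply Hsem_comp; auto. }
  intros n. split.
  - intros HJ.
    set (U := fun o : option nat => match o with None => J_union d alpha q tau1 tau2 sigma eta n
                                     | Some i => I_ball d alpha q tau1 tau2 (f i) end).
    destruct (HLc (option nat) U) as [l Hl].
    + intros [i|]; simpl.
      * apply ball_open; auto.
      * intros x [k [Hk Hx]]. destruct (ball_open d _ _ Hmet x Hx) as [e [He Hb]].
        exists e; split; auto. intros y Hy. exists k; split; auto. apply Hb; auto.
    + intros x Lx. destruct (Classical_Prop.classic (S x)) as [Sx|nSx].
      * exists None; simpl; auto.
      * destruct (proj1 (Hfc x) nSx) as [i Hi]. exists (Some i); simpl; auto.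
    + set (c := maxl l).
      set (lst := map (sigma n) (seq 0 (Datatypes.S (eta n))) ++ map f (seq 0 (Datatypes.S c))).
      destruct (Henc lst) as [j [Hlen Hj]].
      { unfold lst; simpl; discriminate. }
      assert (Hlen' : length lst = Datatypes.S (eta n) + Datatypes.S c).
      { unfold lst; rewrite length_app, !length_map, !length_seq; auto. }
      assert (HL1 : forall a, a < Datatypes.S (eta n) -> nth a lst 0 = sigma n a).
      { intros a Ha. unfold lst. rewrite app_nth1 by (rewrite length_map, length_seq; auto).
        apply nth_map_seq; auto. }
      assert (HL2 : forall a, Datatypes.S (eta n) <= a -> a < length lst ->
                 nth a lst 0 = f (a - Datatypes.S (eta n))).
      { intros a Ha Ha'. unfold lst. rewrite app_nth2 by (rewrite length_map, length_seq; auto).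
        rewrite length_map, length_seq. apply nth_map_seq. lia. }
      assert (HLJ : forall x, L x -> J_union d alpha q tau1 tau2 sigma eta j x).
      { intros x Lx. destruct (Hl x Lx) as [[i|] [Hin Hx]]; simpl in Hx.
        - pose proof (maxl_In l i Hin) as Hic. fold c in Hic.
          exists (Datatypes.S (eta n) + i). split. lia.
          rewrite Hj by lia. rewrite HL2 by lia. replace (Datatypes.S (eta n) + i - Datatypes.S (eta n)) with i by lia.
          exact Hx.
        - destruct Hx as [k [Hk Hx]]. exists k. split. lia.
          rewrite Hj by lia. rewrite HL1 by lia. exact Hx. }
      destruct (proj1 (HhLe j) HLJ) as [m Hm].
      exists (Nat.max j (Nat.max c m)). apply Hsem_0. exists j, c, m.
      split; [lia|]. split; [lia|]. split; [lia|].
      apply H_inner_0. split; auto. intros a Ha.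
      rewrite Hj by lia. destruct (Nat.lt_ge_cases a (Datatypes.S (eta n))) as [Ha'|Ha'].
      * left. exists a. split. lia. auto.
      * right. exists (a - Datatypes.S (eta n)). split. lia. rewrite HL2 by lia. reflexivity.
  - intros [k Hk]. apply Hsem_0 in Hk. destruct Hk as (j & c & m & _ & _ & _ & E).
    apply H_inner_0 in E. destruct E as [Hm Hall].
    assert (HLJ : forall x, L x -> J_union d alpha q tau1 tau2 sigma eta j x).
    { apply (HhLe j). exists m; auto. }
    intros x Sx. destruct (HLJ x (HSL x Sx)) as [a [Ha Hx]].
    destruct (Hall a Ha) as [[b [Hb E]]|[i [Hi E]]].
    + exists b. split; auto. rewrite <- E. exact Hx.
    + exfalso. apply (proj2 (Hfc x)); auto. exists i. rewrite E. exact Hx.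
Qed.
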